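(* Let $k\ge2$ and let $A=\{a_1,\dots,a_n\}$ be a sorted multiset of positive integers ($a_1\le\dots\le a_n$). Then $$\mathrm{OPT}(A)=\min_{k\le j\le n}\mathrm{OPT_L}(A[1,j]).$$
   Context: $[n]=\{1,\dots,n\}$; $\Sigma(S,A)=\sum_{i\in S}a_i$; for pairwise disjoint $S_1,\dots,S_k\subseteq[n]$, $\mathcal{R}(S_1,\dots,S_k,A)=\max_i\Sigma(S_i,A)/\min_i\Sigma(S_i,A)$ if the minimum is positive and $+\infty$ otherwise. $\mathrm{OPT}(A)$ is the minimum of $\mathcal{R}(S_1,\dots,S_k,A)$ over all $k$-tuples of pairwise disjoint subsets of $[n]$ (the $k$-SSR problem). $\mathrm{OPT_L}(A)$ is the minimum over such $k$-tuples additionally satisfying $n\in\bigcup_{i=1}^kS_i$ (the $k$-SSR$_L$ problem: the largest-index element must be used). $A[l,r]$ denotes the sorted multiset consisting of the items $a_i$ with $l\le i\le r$ (re-indexed in order). *)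

(* Defs.v *)
From mathcomp Require Import all_boot all_order all_algebra.
Set Implicit Arguments. Unset Strict Implicit. Unset Printing Implicit Defensive.
Import Order.TTheory GRing.Theory Num.Theory.

(* A sorted multiset A = {a_1 <= ... <= a_n} is a sequence a : seq nat;
   item a_i (1-based) is nth 0 a (i-1), i.e. index i-1 : 'I_n (0-based). *)

(* Extended nonnegative ratios: Some q is the rational q, None is +infinity. *)
Definition xle (x y : option rat) : bool :=
  match x, y with
  | _, None => true
  | None, Some _ => false
  | Some p, Some q => (p <= q)%R
  end.
Definition xmin (x y : option rat) : option rat := if xle x y then x else y.

Definition Sig (a : seq nat) (n : nat) (S : {set 'I_n}) : nat :=
  \sum_(i in S) nth 0 a i.

Definition pw_disjoint (k n : nat) (P : {ffun 'I_k -> {set 'I_n}}) : bool :=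
  [forall i : 'I_k, forall j : 'I_k, (i != j) ==> [disjoint P i & P j]].

Definition maxSig (a : seq nat) (k n : nat) (P : {ffun 'I_k -> {set 'I_n}}) : nat :=
  \max_(i < k) Sig a (P i).
(* minimum of the Sig (P i); the seed maxSig is >= every term, so for k >= 1
   this is exactly min_i Sig(P i). *)
Definition minSig (a : seq nat) (k n : nat) (P : {ffun 'I_k -> {set 'I_n}}) : nat :=
  \big[minn/maxSig a P]_(i < k) Sig a (P i).

Definition ratioR (a : seq nat) (k n : nat) (P : {ffun 'I_k -> {set 'I_n}})
  : option rat :=
  if (0 < minSig a P)%N
  then Some ((maxSig a P)%:R / (minSig a P)%:R)%R
  else None.

Definition OPT (k : nat) (a : seq nat) : option rat :=
  \big[xmin/None]_(P : {ffun 'I_k -> {set 'I_(size a)}} | pw_disjoint P)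
     ratioR a P.

Definition uses_last (k n : nat) (P : {ffun 'I_k -> {set 'I_n}}) : bool :=
  [exists i : 'I_k, [exists x in P i, val x == n.-1]].

Definition OPTL (k : nat) (a : seq nat) : option rat :=
  \big[xmin/None]_(P : {ffun 'I_k -> {set 'I_(size a)}}
                   | pw_disjoint P && uses_last P)
     ratioR a P.

(* Main.v *)
Require Import Defs.
From mathcomp Require Import all_boot all_order all_algebra.
Import Order.TTheory GRing.Theory Num.Theory.

Lemma xle_refl x : xle x x.
Proof. by case: x => //= p; rewrite lexx. Qed.

Lemma xle_trans x y z : xle x y -> xle y z -> xle x z.
Proof.
case: x => [p|]; case: y => [q|]; case: z => [r|] //=.
exact: le_trans.
Qed.

Lemma xle_total x y : xle x y || xle y x.
Proof. case: x => [p|]; case: y => [q|] //=; exact: le_total. Qed.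

Lemma xle_anti x y : xle x y -> xle y x -> x = y.
Proof.
case: x => [p|]; case: y => [q|] //= h1 h2.
by congr Some; apply/eqP; rewrite eq_le h1 h2.
Qed.

Lemma xle_None x : xle x None.
Proof. by case: x. Qed.

Lemma xmin_l x y : xle (xmin x y) x.
Proof.
rewrite /xmin; case: ifP => [_|h]; first exact: xle_refl.
by have := xle_total x y; rewrite h.
Qed.

Lemma xmin_r x y : xle (xmin x y) y.
Proof. by rewrite /xmin; case: ifP => // _; exact: xle_refl. Qed.

Lemma xmin_glb x y z : xle z x -> xle z y -> xle z (xmin x y).
Proof. by rewrite /xmin; case: ifP. Qed.

Section Big.
Variables (I : eqType).

Lemma xbig_le (r : seq I) (P : pred I) (F : I -> option rat) i :
  i \in r -> P i -> xle (\big[xmin/None]_(j <- r | P j) F j) (F i).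
Proof.
elim: r => //= x r IH; rewrite in_cons => /orP[/eqP->|hin] Pi; rewrite big_cons.
  by rewrite Pi; exact: xmin_l.
case: (P x); last exact: IH.
exact: xle_trans (xmin_r _ _) (IH hin Pi).
Qed.

Lemma xbig_att (r : seq I) (P : pred I) (F : I -> option rat) :
  \big[xmin/None]_(j <- r | P j) F j = None \/
  exists i, [/\ i \in r, P i & \big[xmin/None]_(j <- r | P j) F j = F i].
Proof.
elim: r => [|x r IH]; first by left; rewrite big_nil.
rewrite big_cons; case Px: (P x); last first.
  case: IH => [->|[i [h1 h2 h3]]]; [by left|right; exists i; split=> //; by rewrite in_cons h1 orbT].
rewrite /xmin; case: ifP => _.
  by right; exists x; split=> //; rewrite in_cons eqxx.
case: IH => [->|[i [h1 h2 h3]]]; [by left|right; exists i; split=> //; by rewrite in_cons h1 orbT].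
Qed.
End Big.

Lemma minbig_le (I : eqType) (r : seq I) (P : pred I) (F : I -> nat) x0 i :
  i \in r -> P i -> \big[minn/x0]_(j <- r | P j) F j <= F i.
Proof.
elim: r => //= x r IH; rewrite in_cons => /orP[/eqP->|hin] Pi; rewrite big_cons.
  by rewrite Pi geq_minl.
case: (P x); last exact: IH.
exact: leq_trans (geq_minr _ _) (IH hin Pi).
Qed.

Lemma take_nth j (a : seq nat) i : i < size (take j a) -> nth 0 (take j a) i = nth 0 a i.
Proof. rewrite size_take_min => h; apply: nth_take; exact: leq_trans h (geq_minl _ _). Qed.

Lemma take_size_le j (a : seq nat) : size (take j a) <= size a.
Proof. by rewrite size_take_min geq_minr. Qed.

Section Emb.
Variables (k : nat) (a b : seq nat) (Hle : size b <= size a)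
  (Hnth : forall i, i < size b -> nth 0 b i = nth 0 a i).

Definition emb (P : {ffun 'I_k -> {set 'I_(size b)}}) : {ffun 'I_k -> {set 'I_(size a)}} :=
  [ffun i => widen_ord Hle @: P i].

Lemma widen_inj : injective (widen_ord Hle).
Proof. by move=> x y h; apply: val_inj; have := congr1 val h. Qed.

Lemma emb_Sig P i : Sig a (emb P i) = Sig b (P i).
Proof.
rewrite /Sig ffunE big_imset /=; last by move=> x y _ _; apply: widen_inj.
by apply: eq_bigr => x _; rewrite Hnth.
Qed.

Lemma emb_ratio P : ratioR a (emb P) = ratioR b P.
Proof.
have hM : maxSig a (emb P) = maxSig b P.
  by apply: eq_bigr => i _; rewrite emb_Sig.
have hm : minSig a (emb P) = minSig b P.
  by rewrite /minSig hM; apply: eq_bigr => i _; rewrite emb_Sig.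
by rewrite /ratioR hM hm.
Qed.

Lemma emb_disj P : pw_disjoint P -> pw_disjoint (emb P).
Proof.
move=> /forallP H; apply/forallP => i; apply/forallP => j; apply/implyP => ij.
have := forallP (H i) j; rewrite ij /= -!setI_eq0 !ffunE.
rewrite -imsetI; last by move=> x y _ _; apply: widen_inj.
by move/eqP->; rewrite imset0.
Qed.
End Emb.

Lemma restrict k (a : seq nat) (P : {ffun 'I_k -> {set 'I_(size a)}}) :
  pw_disjoint P -> 0 < minSig a P ->
  exists j, [/\ k <= j, j <= size a & xle (OPTL k (take j a)) (ratioR a P)].
Proof.
move=> Hd Hm.
have Hne : forall i, exists x, x \in P i.
  move=> i; apply/set0Pn; apply/negP => /eqP E.
  have := @minbig_le _ (index_enum 'I_k) (fun _ => true) (fun i => Sig a (P i)) (maxSig a P) i (mem_index_enum i) isT.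
  rewrite [Sig a (P i)]/Sig E big_set0 leqn0 => /eqP h.
  by move: Hm; rewrite /minSig h.
case: k P Hd Hm Hne => [|k] P Hd Hm Hne.
  by move: Hm; rewrite /minSig /maxSig !big_ord0.
pose i0 : 'I_k.+1 := ord0.
pose U := \bigcup_(i < k.+1) P i.
have UP : #|U| > 0.
  case: (Hne i0) => x hx; apply/card_gt0P; exists x; apply/bigcupP; by exists i0.
case: (eq_bigmax_cond (fun x : 'I_(size a) => val x) UP) => xm xmU Exm.
have Hmax : forall i x, x \in P i -> val x <= val xm.
  move=> i x hx.
  have xU : x \in U by apply/bigcupP; exists i.
  have := @leq_bigmax_cond _ (fun y => y \in U) (fun y : 'I_(size a) => val y) x xU.
  by rewrite Exm.
have [i1 _ xmP] : exists2 i1 : 'I_k.+1, true & xm \in P i1.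
  by move: xmU; rewrite /U => /bigcupP [i1 _ h]; exists i1.
set j := (val xm).+1.
set b := take j a.
have Hsb : size b = j by rewrite /b size_takel // ltn_ord.
have Hle := take_size_le j a.
pose P' : {ffun 'I_k.+1 -> {set 'I_(size b)}} := [ffun i => widen_ord Hle @^-1: P i].
have HE : @emb _ _ _ Hle P' = P.
  apply/ffunP => i; rewrite !ffunE; apply/setP => x; apply/imsetP/idP.
    by case=> y; rewrite inE => h ->.
  move=> hx; have hxb : val x < size b by rewrite Hsb ltnS (Hmax i x hx).
  exists (Ordinal hxb); rewrite ?inE; last by apply: val_inj.
  by have -> : widen_ord Hle (Ordinal hxb) = x by apply: val_inj.
have Hd' : pw_disjoint P'.
  move/forallP: Hd => H; apply/forallP => i; apply/forallP => i'; apply/implyP => ii.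
  have := forallP (H i) i'; rewrite ii /= -!setI_eq0 !ffunE -preimsetI.
  by move/eqP->; rewrite preimset0.
have xmb : val xm < size b by rewrite Hsb.
have Hu : uses_last P'.
  apply/existsP; exists i1; apply/existsP; exists (Ordinal xmb).
  rewrite ffunE inE /=; apply/andP; split; last by rewrite [size b]Hsb.
  by have -> : widen_ord Hle (Ordinal xmb) = xm by apply: val_inj.
have Hr : ratioR b P' = ratioR a P by rewrite -(@emb_ratio _ _ _ Hle (@take_nth j a)) HE.
exists j; split.
- pose d : 'I_(size b) := Ordinal xmb.
  pose f i : 'I_(size b) := odflt d [pick x in P' i].
  have fP : forall i, f i \in P' i.
    move=> i; rewrite /f; case: pickP => [x hx //|h].
    case: (Hne i) => y hy.
    have hyb : val y < size b by rewrite Hsb ltnS (Hmax i y hy).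
    have := h (Ordinal hyb); rewrite ffunE inE /=.
    have E : widen_ord Hle (Ordinal hyb) = y by apply: val_inj.
    by rewrite E hy.
  have finj : injective f.
    move=> i i' E; apply/eqP; apply/negP => /negP ii.
    have := forallP (forallP Hd' i) i'; rewrite ii /= => dj.
    have := disjointFr dj (fP i); rewrite E fP //.
  have := leq_card f finj; rewrite !card_ord Hsb //.
- exact: ltn_ord.
- rewrite -Hr; apply: xbig_le; first exact: mem_index_enum.
  by rewrite Hd' Hu.
Qed.

Theorem lemma25 (k : nat) (a : seq nat) :
  (2 <= k)%N ->
  sorted leq a ->
  all (fun x => 0 < x)%N a ->
  OPT k a = \big[xmin/None]_(k <= j < (size a).+1) OPTL k (take j a).
Proof.
move=> _ _ _; apply: xle_anti.
- case: (@xbig_att _ (index_iota k (size a).+1) (fun _ => true) (fun j => OPTL k (take j a))) => [->|[j [_ _ ->]]].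
    exact: xle_None.
  rewrite /OPTL.
  case: (@xbig_att _ (index_enum _) (fun P : {ffun 'I_k -> {set 'I_(size (take j a))}} => pw_disjoint P && uses_last P) (fun P => ratioR (take j a) P)) => [|[P' [_ /andP[Hd' _] ->]]].
    by move=> ->; exact: xle_None.
  have Hle := take_size_le j a.
  rewrite -(@emb_ratio _ _ _ Hle (@take_nth j a)).
  apply: xbig_le; first exact: mem_index_enum.
  exact: emb_disj.
- rewrite /OPT.
  case: (@xbig_att _ (index_enum _) (fun P : {ffun 'I_k -> {set 'I_(size a)}} => pw_disjoint P) (fun P => ratioR a P)) => [|[P [_ Hd ->]]].
    by move=> ->; exact: xle_None.
  case Hm: (0 < minSig a P); last by rewrite /ratioR Hm; exact: xle_None.
  have [j [hk hj hle]] := @restrict _ _ _ Hd Hm.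
  apply: xle_trans hle.
  apply: xbig_le => //.
  by rewrite mem_index_iota hk ltnS.
Qed.
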